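(* Let $G$ be a finitely generated group that contains no free subsemigroup on two generators, and let $N$ be a normal subgroup of $G$ such that the quotient $G/N$ is an elementary amenable group. Then $N$ is finitely generated.
   Context: The class of elementary amenable groups is the smallest class of groups containing all finite groups and all abelian groups and closed under taking subgroups, taking quotient groups, extensions (if $K\trianglelefteq L$ with $K$ and $L/K$ in the class then $L$ is in the class), and directed unions. *)

(* Defs.v *)
From Stdlib Require Import List.
Import ListNotations.

Record group := Group {
  gcar :> Type;
  gmul : gcar -> gcar -> gcar;
  ginv : gcar -> gcar;
  gone : gcar;
  gmulA : forall x y z, gmul x (gmul y z) = gmul (gmul x y) z;
  gmul1l : forall x, gmul gone x = x;
  gmulVl : forall x, gmul (ginv x) x = gone
}.

Arguments gmul {g}.
Arguments ginv {g}.
Arguments gone {g}.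

Definition is_hom (G H : group) (f : G -> H) : Prop :=
  forall x y : G, f (gmul x y) = gmul (f x) (f y).

Definition injective {A B : Type} (f : A -> B) : Prop :=
  forall x y, f x = f y -> x = y.

Definition surjective {A B : Type} (f : A -> B) : Prop :=
  forall y, exists x, f x = y.

Definition finite_group (G : group) : Prop :=
  exists l : list G, forall x : G, In x l.

Definition abelian_group (G : group) : Prop :=
  forall x y : G, gmul x y = gmul y x.

(* Subgroups/quotients are taken up to isomorphism
   (injective / surjective homomorphisms); in particular the class is closed
   under isomorphism. *)
Inductive elem_amenable : group -> Prop :=
| EA_finite : forall G, finite_group G -> elem_amenable G
| EA_abelian : forall G, abelian_group G -> elem_amenable G
| EA_sub : forall (G H : group) (f : H -> G),
    is_hom H G f -> injective f -> elem_amenable G -> elem_amenable H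
| EA_quot : forall (G Q : group) (f : G -> Q),
    is_hom G Q f -> surjective f -> elem_amenable G -> elem_amenable Q
| EA_ext : forall (K L Q : group) (i : K -> L) (p : L -> Q),
    is_hom K L i -> injective i -> is_hom L Q p -> surjective p ->
    (forall x : L, p x = gone <-> exists k, i k = x) ->
    elem_amenable K -> elem_amenable Q -> elem_amenable L
| EA_union : forall (L : group) (I : Type) (H : I -> group)
      (e : forall i, H i -> L),
    (forall i, is_hom (H i) L (e i)) -> (forall i, injective (e i)) ->
    (forall i j, exists k,
        (forall y, exists z, e k z = e i y) /\
        (forall y, exists z, e k z = e j y)) ->
    (forall x : L, exists i y, e i y = x) ->
    (forall i, elem_amenable (H i)) -> elem_amenable L.

Definition is_subgroup (G : group) (P : G -> Prop) : Prop :=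
  P gone /\ (forall x y, P x -> P y -> P (gmul x y)) /\ (forall x, P x -> P (ginv x)).

Definition is_normal (G : group) (N : G -> Prop) : Prop :=
  is_subgroup G N /\ forall g x, N x -> N (gmul (ginv g) (gmul x g)).

Definition generated (G : group) (S : G -> Prop) (x : G) : Prop :=
  forall P, is_subgroup G P -> (forall s, S s -> P s) -> P x.

Definition fin_gen (G : group) : Prop :=
  exists l : list G, forall x : G, generated G (fun s => In s l) x.

Definition fin_gen_subgroup (G : group) (N : G -> Prop) : Prop :=
  exists l : list G, (forall s, In s l -> N s) /\
    forall x : G, N x <-> generated G (fun s => In s l) x.

(* free subsemigroup on two generators a, b: the evaluation map from nonempty
   words over {a,b} (first letter, remaining letters) is injective *)
Definition word_val (G : group) (a b : G) (w : bool * list bool) : G :=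
  let letter (c : bool) := if c then a else b in
  fold_left (fun acc c => gmul acc (letter c)) (snd w) (letter (fst w)).

Definition has_free_subsemigroup2 (G : group) : Prop :=
  exists a b : G, injective (word_val G a b).

Definition quotient_elem_amenable (G : group) (N : G -> Prop) : Prop :=
  exists (Q : group) (f : G -> Q), is_hom G Q f /\ surjective f /\
    (forall x, N x <-> f x = gone) /\ elem_amenable Q.

(* Main.v *)
Require Import Defs.
From Stdlib Require Import List Lia ZArith Classical ClassicalEpsilon.
Import ListNotations.

Section Basics.
Variable G : group.
Local Infix "·" := (@gmul G) (at level 40, left associativity).
Local Notation "x ⁻¹" := (@ginv G x) (at level 3, format "x ⁻¹").
Local Notation "1" := (@gone G).

Lemma mulgV (x : G) : x · x⁻¹ = 1.
Proof.
  rewrite <- (gmul1l _ (x · x⁻¹)).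
  rewrite <- (gmulVl _ (x⁻¹)) at 1.
  rewrite <- gmulA. rewrite (gmulA _ x⁻¹ x x⁻¹), gmulVl, gmul1l. apply gmulVl.
Qed.

Lemma mulg1 (x : G) : x · 1 = x.
Proof. rewrite <- (gmulVl _ x), gmulA, mulgV, gmul1l. reflexivity. Qed.

Lemma mulKg (x y : G) : x⁻¹ · (x · y) = y.
Proof. rewrite gmulA, gmulVl, gmul1l. reflexivity. Qed.

Lemma mulVKg (x y : G) : x · (x⁻¹ · y) = y.
Proof. rewrite gmulA, mulgV, gmul1l. reflexivity. Qed.

Lemma mulgK (x y : G) : y · x · x⁻¹ = y.
Proof. rewrite <- gmulA, mulgV, mulg1. reflexivity. Qed.

Lemma mulgVK (x y : G) : y · x⁻¹ · x = y.
Proof. rewrite <- gmulA, gmulVl, mulg1. reflexivity. Qed.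

Lemma mulg_cancel_l (a x y : G) : a · x = a · y -> x = y.
Proof. intros H. rewrite <- (mulKg a x), <- (mulKg a y), H. reflexivity. Qed.

Lemma mulg_cancel_r (a x y : G) : x · a = y · a -> x = y.
Proof. intros H. rewrite <- (mulgK a x), <- (mulgK a y), H. reflexivity. Qed.

Lemma inv_uniq (x y : G) : x · y = 1 -> y = x⁻¹.
Proof. intros H. apply (mulg_cancel_l x). rewrite H, mulgV. reflexivity. Qed.

Lemma invgK (x : G) : x⁻¹⁻¹ = x.
Proof. symmetry. apply inv_uniq. apply gmulVl. Qed.

Lemma invMg (x y : G) : (x · y)⁻¹ = y⁻¹ · x⁻¹.
Proof. symmetry. apply inv_uniq. rewrite gmulA, <- (gmulA _ x y), mulgV, mulg1, mulgV. reflexivity. Qed.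

Lemma invg1 : (1 : G)⁻¹ = 1.
Proof. symmetry. apply inv_uniq. apply gmul1l. Qed.

Lemma invg_inj (x y : G) : x⁻¹ = y⁻¹ -> x = y.
Proof. intros H. rewrite <- (invgK x), H, invgK. reflexivity. Qed.


Definition gen (S : G -> Prop) := generated G S.

Lemma gen_subgroup S : is_subgroup G (gen S).
Proof.
  split; [|split].
  - intros P [H1 _] _. exact H1.
  - intros x y Hx Hy P HP HS. pose proof HP as [_ [HM _]]. apply HM; [apply Hx|apply Hy]; auto.
  - intros x Hx P HP HS. pose proof HP as [_ [_ HI]]. apply HI; apply Hx; auto.
Qed.

Lemma gen_in S x : S x -> gen S x.
Proof. intros Hx P _ HS. auto. Qed.

Lemma gen_min S (P : G -> Prop) : is_subgroup G P -> (forall s, S s -> P s) -> forall x, gen S x -> P x.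
Proof. intros HP HS x Hx. apply Hx; auto. Qed.

Lemma gen_gen S S' : (forall s, S s -> gen S' s) -> forall x, gen S x -> gen S' x.
Proof. intros H. apply gen_min; auto. apply gen_subgroup. Qed.

Lemma gen_mono (S S' : G -> Prop) : (forall s, S s -> S' s) -> forall x, gen S x -> gen S' x.
Proof. intros H. apply gen_gen. intros s Hs. apply gen_in; auto. Qed.

Lemma sub1 P : is_subgroup G P -> P 1.
Proof. intros [H _]; exact H. Qed.
Lemma subM P : is_subgroup G P -> forall x y, P x -> P y -> P (x · y).
Proof. intros [_ [H _]]; exact H. Qed.
Lemma subV P : is_subgroup G P -> forall x, P x -> P x⁻¹.
Proof. intros [_ [_ H]]; exact H. Qed.
Lemma subVr P : is_subgroup G P -> forall x, P x⁻¹ -> P x.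
Proof. intros HP x H. rewrite <- invgK. apply subV; auto. Qed.

Lemma sub_ext (P Q : G -> Prop) : (forall x, P x <-> Q x) -> is_subgroup G P -> is_subgroup G Q.
Proof.
  intros E [H1 [H2 H3]]. split; [|split].
  - apply E; auto.
  - intros x y Hx Hy. apply E. apply H2; apply E; auto.
  - intros x Hx. apply E. apply H3; apply E; auto.
Qed.

Lemma fgs_ext (P Q : G -> Prop) : (forall x, P x <-> Q x) -> fin_gen_subgroup G P -> fin_gen_subgroup G Q.
Proof.
  intros E [l [H1 H2]]. exists l. split.
  - intros s Hs. apply E; auto.
  - intros x. rewrite <- E. apply H2.
Qed.

Lemma fgs_subgroup P : fin_gen_subgroup G P -> is_subgroup G P.
Proof.
  intros [l [_ H]]. apply (sub_ext (gen (fun s => In s l))).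
  - intros x; rewrite H; tauto.
  - apply gen_subgroup.
Qed.

Lemma gen_self P : is_subgroup G P -> forall x, gen P x <-> P x.
Proof. intros HP x; split; [apply gen_min; auto | apply gen_in]. Qed.

Definition cj (c x : G) := c · x · c⁻¹.

Lemma cjM c x y : cj c (x · y) = cj c x · cj c y.
Proof. unfold cj. rewrite !gmulA, mulgVK. reflexivity. Qed.
Lemma cjV c x : cj c x⁻¹ = (cj c x)⁻¹.
Proof. unfold cj. rewrite !invMg, invgK, gmulA. reflexivity. Qed.
Lemma cj1 c : cj c 1 = 1.
Proof. unfold cj. rewrite mulg1, mulgV. reflexivity. Qed.
Lemma cj_inj c x y : cj c x = cj c y -> x = y.
Proof. unfold cj. intros H. apply mulg_cancel_r in H. apply mulg_cancel_l in H. exact H. Qed.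
Lemma cjcj c d x : cj c (cj d x) = cj (c · d) x.
Proof. unfold cj. rewrite invMg, !gmulA. reflexivity. Qed.
Lemma cj_by1 x : cj 1 x = x.
Proof. unfold cj. rewrite invg1, mulg1, gmul1l. reflexivity. Qed.

Lemma gen_cj S c x : gen S x -> gen (fun y => exists z, S z /\ y = cj c z) (cj c x).
Proof.
  revert x. apply gen_min.
  - split; [|split].
    + rewrite cj1. apply sub1, gen_subgroup.
    + intros x y Hx Hy. rewrite cjM. apply subM; auto; apply gen_subgroup.
    + intros x Hx. rewrite cjV. apply subV; auto; apply gen_subgroup.
  - intros s Hs. apply gen_in. eauto.
Qed.

Definition prod (w : list G) := fold_right (@gmul G) 1 w.

Lemma prod_app w1 w2 : prod (w1 ++ w2) = prod w1 · prod w2.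
Proof. induction w1; simpl. rewrite gmul1l; auto. rewrite IHw1, gmulA; auto. Qed.

Lemma prod_inv w : prod (rev (map (@ginv G) w)) = (prod w)⁻¹.
Proof.
  induction w; simpl. rewrite invg1; auto.
  rewrite prod_app, IHw. simpl. rewrite mulg1, invMg. reflexivity.
Qed.

Lemma gen_words (l : list G) x : gen (fun s => In s l) x ->
  exists w, (forall s, In s w -> In s l \/ In s⁻¹ l) /\ x = prod w.
Proof.
  revert x. apply gen_min.
  - split; [|split].
    + exists []. simpl. split; [tauto|auto].
    + intros x y [w1 [H1 E1]] [w2 [H2 E2]]. exists (w1 ++ w2). split.
      * intros s Hs. apply in_app_or in Hs. destruct Hs; auto.
      * rewrite prod_app; subst; auto.
    + intros x [w [H1 E1]]. exists (rev (map (@ginv G) w)). split.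
      * intros s Hs. apply in_rev in Hs. apply in_map_iff in Hs. destruct Hs as [s' [<- Hs']].
        rewrite invgK. destruct (H1 s' Hs'); auto.
      * rewrite prod_inv; subst; auto.
  - intros s Hs. exists [s]. simpl. split. intros s' [<-|[]]; auto. rewrite mulg1; auto.
Qed.

Lemma prod_in P : is_subgroup G P -> forall w, (forall s, In s w -> P s) -> P (prod w).
Proof.
  intros HP w; induction w; simpl; intros H. apply sub1; auto.
  apply subM; auto.
Qed.

Fixpoint gpow (g : G) (n : nat) : G := match n with 0 => 1 | S n => g · gpow g n end.

Lemma gpow_add g a b : gpow g (a + b) = gpow g a · gpow g b.
Proof. induction a; simpl. rewrite gmul1l; auto. rewrite IHa, gmulA; auto. Qed.

Lemma gpow_Sr g n : gpow g (S n) = gpow g n · g.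
Proof. replace (S n) with (n + 1) by lia. rewrite gpow_add. simpl. rewrite mulg1. auto. Qed.

Lemma gpow_comm g a b : gpow g a · gpow g b = gpow g b · gpow g a.
Proof. rewrite <- !gpow_add, Nat.add_comm. auto. Qed.

Lemma gpow_invg g n : gpow g⁻¹ n = (gpow g n)⁻¹.
Proof. induction n; simpl. rewrite invg1; auto. rewrite IHn, <- invMg, <- gpow_Sr. auto. Qed.

Lemma gpow_in P : is_subgroup G P -> forall g, P g -> forall n, P (gpow g n).
Proof. intros HP g Hg n; induction n; simpl. apply sub1; auto. apply subM; auto. Qed.

Definition zpow (g : G) (z : Z) : G :=
  match z with Z0 => 1 | Zpos p => gpow g (Pos.to_nat p) | Zneg p => (gpow g (Pos.to_nat p))⁻¹ end.

Lemma zpow_nat g n : zpow g (Z.of_nat n) = gpow g n.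
Proof. destruct n; simpl; auto. rewrite SuccNat2Pos.id_succ. auto. Qed.

Lemma zpow_opp g z : zpow g (- z)%Z = (zpow g z)⁻¹.
Proof. destruct z; simpl; auto. rewrite invg1; auto. rewrite invgK; auto. Qed.

Lemma zpow_nat_opp g n : zpow g (- Z.of_nat n)%Z = gpow g⁻¹ n.
Proof. rewrite zpow_opp, zpow_nat, gpow_invg. auto. Qed.

Lemma zpow_diff g a b : zpow g (Z.of_nat a - Z.of_nat b)%Z = gpow g a · (gpow g b)⁻¹.
Proof.
  destruct (le_lt_dec b a) as [H|H].
  - replace a with (b + (a - b)) by lia. replace (Z.of_nat (b + (a - b)) - Z.of_nat b)%Z with (Z.of_nat (a - b)) by lia.
    rewrite zpow_nat, gpow_add, gpow_comm, mulgK. auto.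
  - replace b with ((b - a) + a) by lia. replace (Z.of_nat a - Z.of_nat (b - a + a))%Z with (- Z.of_nat (b - a))%Z by lia.
    rewrite zpow_opp, zpow_nat, gpow_add, invMg, gmulA, mulgV, gmul1l. auto.
Qed.

Lemma zpow_repr (z : Z) : z = (Z.of_nat (Z.to_nat z) - Z.of_nat (Z.to_nat (- z)))%Z.
Proof. lia. Qed.

Lemma comm_inv (x y : G) : x · y = y · x -> x · y⁻¹ = y⁻¹ · x.
Proof.
  intros H. rewrite <- (mulKg y (x · y⁻¹)). rewrite (gmulA _ y x), <- H, mulgK. auto.
Qed.

Lemma zpow_add g a b : zpow g (a + b)%Z = zpow g a · zpow g b.
Proof.
  rewrite (zpow_repr a), (zpow_repr b).
  set (a1 := Z.to_nat a). set (a2 := Z.to_nat (-a)). set (b1 := Z.to_nat b). set (b2 := Z.to_nat (-b)).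
  replace (Z.of_nat a1 - Z.of_nat a2 + (Z.of_nat b1 - Z.of_nat b2))%Z with (Z.of_nat (a1 + b1) - Z.of_nat (a2 + b2))%Z by lia.
  rewrite !zpow_diff, !gpow_add. rewrite (gpow_comm g a2 b2), invMg.
  rewrite !gmulA. f_equal. rewrite <- !gmulA. f_equal. apply comm_inv. apply gpow_comm.
Qed.

Lemma zpow_in P : is_subgroup G P -> forall g, P g -> forall z, P (zpow g z).
Proof.
  intros HP g Hg z. destruct z; simpl. apply sub1; auto. apply gpow_in; auto. apply subV; auto; apply gpow_in; auto.
Qed.

Lemma zpow0 g : zpow g 0 = 1. Proof. auto. Qed.
Lemma zpow1 g : zpow g 1 = g. Proof. simpl. apply mulg1. Qed.

Lemma subgroup_of_fg (A : G -> Prop) (lA : list G) : (forall x, A x <-> gen (fun s => In s lA) x) -> is_subgroup G A.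
Proof. intros E. apply (sub_ext (gen (fun s => In s lA))). intros; rewrite E; tauto. apply gen_subgroup. Qed.

Fixpoint pick (B : G -> Prop) (x : G) (l : list G) : G :=
  match l with
  | [] => 1
  | t :: l' => if excluded_middle_informative (B (x · t⁻¹)) then t else pick B x l'
  end.

Lemma pick_spec B x l : (exists t, In t l /\ B (x · t⁻¹)) -> In (pick B x l) l /\ B (x · (pick B x l)⁻¹).
Proof.
  induction l as [|t l IH]; simpl. intros [t [[] _]].
  intros [t' [Ht' Hb]]. destruct (excluded_middle_informative (B (x · t⁻¹))). auto.
  destruct Ht' as [<-|Ht']. contradiction. destruct IH; eauto.
Qed.

Lemma pick_inv B x y l : (forall t, B (x · t⁻¹) <-> B (y · t⁻¹)) -> pick B x l = pick B y l.
Proof.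
  intros E. induction l as [|t l IH]; simpl; auto.
  destruct (excluded_middle_informative (B (x · t⁻¹))) as [h1|h1];
  destruct (excluded_middle_informative (B (y · t⁻¹))) as [h2|h2]; auto.
  - exfalso; apply h2, E, h1.
  - exfalso; apply h1, E, h2.
Qed.

Lemma coset_iff B : is_subgroup G B -> forall x y, B (x · y⁻¹) -> forall t, B (x · t⁻¹) <-> B (y · t⁻¹).
Proof.
  intros HB x y Hxy t. split; intros H.
  - replace (y · t⁻¹) with ((x · y⁻¹)⁻¹ · (x · t⁻¹)). apply subM; auto. apply subV; auto.
    rewrite invMg, invgK, <- gmulA, mulKg. auto.
  - replace (x · t⁻¹) with ((x · y⁻¹) · (y · t⁻¹)). apply subM; auto.
    rewrite <- gmulA, mulKg. auto.
Qed.

Lemma in_S (lA : list G) s : In s lA \/ In s⁻¹ lA -> In s (lA ++ map (@ginv G) lA).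
Proof.
  intros [H|H]; apply in_or_app; auto. right. rewrite <- (invgK s). apply in_map. auto.
Qed.

Lemma schreier (A B : G -> Prop) (lA T : list G) :
  (forall s, In s lA -> A s) -> (forall x, A x <-> gen (fun s => In s lA) x) ->
  is_subgroup G B -> (forall x, B x -> A x) -> (forall t, In t T -> A t) ->
  (forall a, A a -> exists t, In t T /\ B (a · t⁻¹)) -> fin_gen_subgroup G B.
Proof.
  intros HlA EA HB BA TA Hcov.
  assert (HA : is_subgroup G A) by (eapply subgroup_of_fg; eauto).
  set (T' := 1 :: T).
  set (r := fun x => pick B x T').
  assert (Hr1 : forall x, A x -> In (r x) T' /\ B (x · (r x)⁻¹)).
  { intros x Hx. apply pick_spec. destruct (Hcov x Hx) as [t [Ht Hb]]. exists t. split; simpl; auto. }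
  assert (Hr2 : forall x y, B (x · y⁻¹) -> r x = r y).
  { intros x y H. apply pick_inv. apply coset_iff; auto. }
  assert (Hr3 : r 1 = 1).
  { unfold r, pick, T'. destruct (excluded_middle_informative (B (1 · 1⁻¹))) as [_|h]; auto.
    exfalso. apply h. rewrite mulgV. apply sub1; auto. }
  assert (T'A : forall t, In t T' -> A t).
  { intros t [<-|Ht]. apply sub1; auto. auto. }
  set (S := lA ++ map (@ginv G) lA).
  assert (SA : forall s, In s S -> A s).
  { intros s Hs. apply in_app_or in Hs. destruct Hs as [Hs|Hs]; auto.
    apply in_map_iff in Hs. destruct Hs as [s' [<- Hs']]. apply subV; auto. }
  set (l' := map (fun t => t · (r t)⁻¹) T' ++ flat_map (fun t => map (fun s => t · s · (r (t · s))⁻¹) S) T').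
  assert (l'B : forall y, In y l' -> B y).
  { intros y Hy. apply in_app_or in Hy. destruct Hy as [Hy|Hy].
    - apply in_map_iff in Hy. destruct Hy as [t [<- Ht]]. apply Hr1; auto.
    - apply in_flat_map in Hy. destruct Hy as [t [Ht Hy]]. apply in_map_iff in Hy.
      destruct Hy as [s [<- Hs]]. apply Hr1. apply subM; auto. }
  assert (Key : forall w, (forall s, In s w -> In s S) -> forall t, In t T' ->
            gen (fun y => In y l') (t · prod w · (r (t · prod w))⁻¹)).
  { induction w as [|s w IH]; intros Hw t Ht.
    - change (prod []) with 1. apply gen_in. rewrite mulg1. apply in_or_app. left. apply (in_map (fun t => t · (r t)⁻¹)). auto.
    - change (prod (s :: w)) with (s · prod w).
      assert (Hs : In s S) by (apply Hw; simpl; auto).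
      set (t' := r (t · s)).
      assert (Ht' : In t' T') by (apply Hr1; apply subM; auto).
      assert (E : r (t · (s · prod w)) = r (t' · prod w)).
      { apply Hr2. replace (t · (s · prod w) · (t' · prod w)⁻¹) with (t · s · t'⁻¹).
        apply Hr1. apply subM; auto.
        rewrite invMg, !gmulA, mulgK. auto. }
      replace (t · (s · prod w) · (r (t · (s · prod w)))⁻¹) with ((t · s · t'⁻¹) · (t' · prod w · (r (t' · prod w))⁻¹)).
      + apply subM. apply gen_subgroup.
        * apply gen_in. apply in_or_app. right. apply in_flat_map. exists t. split; auto.
          apply (in_map (fun s => t · s · (r (t · s))⁻¹)). auto.
        * apply IH; auto. intros s' Hs'. apply Hw. simpl; auto.
      + rewrite E. rewrite !gmulA. f_equal. f_equal. rewrite mulgVK. auto. }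
  exists l'. split; auto.
  intros x. split.
  - intros Hx. destruct (gen_words lA x) as [w [Hw Ex]]. apply EA; auto.
    pose proof (Key w (fun s Hs => in_S lA s (Hw s Hs)) 1 (or_introl eq_refl)) as K.
    rewrite gmul1l, <- Ex in K. rewrite (Hr2 x 1) in K. rewrite Hr3, invg1, mulg1 in K. auto.
    rewrite invg1, mulg1. auto.
  - apply gen_min; auto.
Qed.

Definition cjn (t : G) (i : nat) (x : G) := cj (gpow t i) x.

Lemma cj_cjn t i x : cj t (cjn t i x) = cjn t (S i) x.
Proof. unfold cjn. rewrite cjcj. reflexivity. Qed.

Lemma cjn1 t x : cjn t 1 x = cj t x.
Proof. unfold cjn. simpl. rewrite mulg1. auto. Qed.

Lemma fold_prod (a c : G) l a0 :
  fold_left (fun acc (ch : bool) => acc · (if ch then a else c)) l a0 = a0 · prod (map (fun ch : bool => if ch then a else c) l).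
Proof.
  revert a0; induction l as [|ch l IH]; intros a0; simpl. rewrite mulg1; auto.
  rewrite IH, gmulA. auto.
Qed.

Section Core.
Variables (D : G -> Prop) (b t : G).

Fixpoint Pw (l : list bool) : G :=
  match l with
  | [] => 1
  | true :: l => b · cj t (Pw l)
  | false :: l => cj t (Pw l)
  end.

Lemma prod_P w : prod (map (fun ch : bool => if ch then b · t else t) w) = Pw w · gpow t (length w).
Proof.
  induction w as [|[|] w IH]; simpl.
  - rewrite mulg1; auto.
  - rewrite IH. unfold cj. rewrite !gmulA, mulgVK. auto.
  - rewrite IH. unfold cj. rewrite !gmulA, mulgVK. auto.
Qed.

Lemma P_in : is_subgroup G D -> D b -> (forall x, D x -> D (cj t x)) -> forall w, D (Pw w).
Proof.
  intros HD Hb Hc w; induction w as [|[|] w IH]; simpl. apply sub1; auto. apply subM; auto. auto.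
Qed.

Definition win (p : nat) := fun y => exists i, 1 <= i <= p /\ y = cjn t i b.

Lemma P_gen w : gen (win (length w)) (cj t (Pw w)).
Proof.
  induction w as [|c w IH]; simpl.
  - rewrite cj1. apply sub1, gen_subgroup.
  - assert (H : gen (win (S (length w))) (cj t (cj t (Pw w)))).
    { apply (gen_mono (fun y => exists z, win (length w) z /\ y = cj t z)).
      - intros y [z [[i [Hi ->]] ->]]. exists (S i). split. lia. apply cj_cjn.
      - apply gen_cj. auto. }
    destruct c; auto.
    rewrite cjM. apply subM. apply gen_subgroup. apply gen_in. exists (S O). split. lia. rewrite cjn1. auto.
    auto.
Qed.

Lemma P_diff u v : length u = length v -> u <> v -> Pw u = Pw v -> exists p, gen (win p) b.
Proof.
  revert v; induction u as [|c1 u IH]; intros [|c2 v] Hl Hne HP; simpl in Hl; try discriminate.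
  - contradiction.
  - injection Hl as Hl.
    destruct c1, c2; simpl in HP.
    + apply mulg_cancel_l, cj_inj in HP. apply (IH v); auto. intros ->. auto.
    + exists (length u). assert (E : b = cj t (Pw v) · (cj t (Pw u))⁻¹).
      { rewrite <- HP. rewrite mulgK. auto. }
      rewrite E. apply subM. apply gen_subgroup. rewrite Hl. apply P_gen.
      apply subV. apply gen_subgroup. apply P_gen.
    + exists (length u). assert (E : b = cj t (Pw u) · (cj t (Pw v))⁻¹).
      { rewrite HP. rewrite mulgK. auto. }
      rewrite E. apply subM. apply gen_subgroup. apply P_gen.
      apply subV. apply gen_subgroup. rewrite Hl. apply P_gen.
    + apply cj_inj in HP. apply (IH v); auto. intros ->. auto.
Qed.

Lemma core_rel : ~ has_free_subsemigroup2 G -> is_subgroup G D -> D b ->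
  (forall n, 0 < n -> ~ D (gpow t n)) -> (forall x, D x -> D (cj t x)) ->
  exists p, gen (win p) b.
Proof.
  intros NF HD Hb Ht Hc.
  assert (NI : ~ injective (word_val G (b · t) t)) by (intros Hi; apply NF; exists (b · t), t; exact Hi).
  unfold injective in NI. apply not_all_ex_not in NI. destruct NI as [[x1 l1] NI].
  apply not_all_ex_not in NI. destruct NI as [[x2 l2] NI].
  apply imply_to_and in NI. destruct NI as [Heq Hne].
  unfold word_val in Heq. simpl in Heq. rewrite !fold_prod in Heq.
  set (u := x1 :: l1). set (v := x2 :: l2).
  assert (Ev : prod (map (fun ch : bool => if ch then b · t else t) u) = prod (map (fun ch : bool => if ch then b · t else t) v)).
  { simpl. exact Heq. }
  rewrite !prod_P in Ev.
  assert (Huv : u <> v). { intros E. injection E as -> ->. auto. }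
  destruct (lt_eq_lt_dec (length u) (length v)) as [[Hlt|Heql]|Hlt].
  - exfalso. replace (length v) with ((length v - length u) + length u) in Ev by lia.
    rewrite gpow_add, gmulA in Ev. apply mulg_cancel_r in Ev.
    apply (Ht (length v - length u)). lia.
    replace (gpow t (length v - length u)) with ((Pw v)⁻¹ · Pw u).
    apply subM; auto. apply subV; auto. apply P_in; auto. apply P_in; auto.
    rewrite Ev. rewrite mulKg. auto.
  - rewrite Heql in Ev. apply mulg_cancel_r in Ev. eapply P_diff; eauto.
  - exfalso. replace (length u) with ((length u - length v) + length v) in Ev by lia.
    rewrite gpow_add, gmulA in Ev. apply mulg_cancel_r in Ev.
    apply (Ht (length u - length v)). lia.
    replace (gpow t (length u - length v)) with ((Pw u)⁻¹ · Pw v).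
    apply subM; auto. apply subV; auto. apply P_in; auto. apply P_in; auto.
    rewrite <- Ev. rewrite mulKg. auto.
Qed.

End Core.

Definition vz (s b : G) (k : Z) := cj (zpow s k) b.

Lemma vz_shift s b k i : cj (zpow s k) (vz s b i) = vz s b (k + i).
Proof. unfold vz. rewrite cjcj, zpow_add. auto. Qed.

Lemma vz0 s b : vz s b 0 = b.
Proof. unfold vz. simpl. apply cj_by1. Qed.

Section ZL.
Variables (D : G -> Prop) (s : G).
Hypothesis NF : ~ has_free_subsemigroup2 G.
Hypothesis HD : is_subgroup G D.
Hypothesis Hs : forall m : Z, m <> 0%Z -> ~ D (zpow s m).
Hypothesis Hc1 : forall x, D x -> D (cj s x).
Hypothesis Hc2 : forall x, D x -> D (cj s⁻¹ x).

Lemma core_both b : D b -> exists p q,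
  gen (fun y => exists i, 1 <= i <= p /\ y = vz s b (Z.of_nat i)) b /\
  gen (fun y => exists i, 1 <= i <= q /\ y = vz s b (- Z.of_nat i)) b.
Proof.
  intros Hb.
  destruct (core_rel D b s NF HD Hb) as [p Hp]; auto.
  { intros n Hn HDn. apply (Hs (Z.of_nat n)). lia. rewrite zpow_nat. auto. }
  destruct (core_rel D b s⁻¹ NF HD Hb) as [q Hq]; auto.
  { intros n Hn HDn. apply (Hs (- Z.of_nat n)). lia. rewrite zpow_nat_opp. auto. }
  exists p, q. split.
  - revert Hp. apply gen_mono. intros y [i [Hi ->]]. exists i. split; auto.
    unfold cjn, vz. rewrite zpow_nat. auto.
  - revert Hq. apply gen_mono. intros y [i [Hi ->]]. exists i. split; auto.
    unfold cjn, vz. rewrite zpow_nat_opp. auto.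
Qed.

Lemma all_vz b : D b -> exists N, forall k,
  gen (fun y => exists i, i < N /\ y = vz s b (Z.of_nat i)) (vz s b k).
Proof.
  intros Hb. destruct (core_both b Hb) as [p [q [E1 E2]]].
  set (N := Nat.max p q). exists N.
  set (W := fun y => exists i, i < N /\ y = vz s b (Z.of_nat i)).
  assert (S1 : forall k, gen (fun y => exists i, 1 <= i <= p /\ y = vz s b (k + Z.of_nat i)) (vz s b k)).
  { intros k. apply gen_cj with (c := zpow s k) in E1. revert E1. apply gen_mono.
    intros y [z [[i [Hi ->]] ->]]. exists i. split; auto. apply vz_shift. }
  assert (S2 : forall k, gen (fun y => exists i, 1 <= i <= q /\ y = vz s b (k + - Z.of_nat i)) (vz s b k)).
  { intros k. apply gen_cj with (c := zpow s k) in E2. revert E2. apply gen_mono.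
    intros y [z [[i [Hi ->]] ->]]. exists i. split; auto. apply vz_shift. }
  assert (Cl : forall n k, (- Z.of_nat n <= k < Z.of_nat N + Z.of_nat n)%Z -> gen W (vz s b k)).
  { induction n as [|n IH]; intros k Hk.
    - apply gen_in. exists (Z.to_nat k). split. lia. f_equal. lia.
    - destruct (Z.eq_dec k (- Z.of_nat (S n))) as [Ek|Ek].
      + specialize (S1 k). revert S1. apply gen_gen. intros y [i [Hi ->]]. apply IH. lia.
      + destruct (Z.eq_dec k (Z.of_nat N + Z.of_nat n)) as [Ek'|Ek'].
        * specialize (S2 k). revert S2. apply gen_gen. intros y [i [Hi ->]]. apply IH. lia.
        * apply IH. lia. }
  intros k. apply (Cl (S (Z.to_nat (Z.abs k)))). lia.
Qed.

Lemma vz_list (bs : list G) : (forall b, In b bs -> D b) ->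
  exists l', (forall y, In y l' -> exists b, In b bs /\ exists k, y = vz s b k) /\
             (forall b, In b bs -> forall k, gen (fun y => In y l') (vz s b k)).
Proof.
  induction bs as [|b bs IH]; intros Hbs.
  - exists []. split. intros y []. intros b [].
  - destruct IH as [l'' [H1 H2]]. intros; apply Hbs; simpl; auto.
    destruct (all_vz b) as [N HN]. apply Hbs; simpl; auto.
    exists (map (fun i => vz s b (Z.of_nat i)) (seq 0 N) ++ l''). split.
    + intros y Hy. apply in_app_or in Hy. destruct Hy as [Hy|Hy].
      * apply in_map_iff in Hy. destruct Hy as [i [<- _]]. exists b. split. simpl; auto. eauto.
      * destruct (H1 y Hy) as [b' [Hb' Hk]]. exists b'. split; simpl; auto.
    + intros b' [<-|Hb'] k.
      * specialize (HN k). revert HN. apply gen_mono. intros y [i [Hi ->]].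
        apply in_or_app. left. apply (in_map (fun i => vz s b (Z.of_nat i))). apply in_seq. lia.
      * specialize (H2 b' Hb' k). revert H2. apply gen_mono. intros y Hy. apply in_or_app. auto.
Qed.

End ZL.

Lemma D_cj (C D : G -> Prop) : is_subgroup G C -> (forall c d, C c -> D d -> D (c⁻¹ · d · c)) ->
  forall c d, C c -> D d -> D (cj c d).
Proof.
  intros HC HN c d Hc Hd. unfold cj. rewrite <- (invgK c) at 1. apply HN; auto. apply subV; auto.
Qed.

Lemma zlemma (C D : G -> Prop) (lC : list G) (s : G) :
  ~ has_free_subsemigroup2 G ->
  (forall x, In x lC -> C x) -> (forall x, C x <-> gen (fun y => In y lC) x) ->
  is_subgroup G D -> (forall x, D x -> C x) ->
  (forall c d, C c -> D d -> D (c⁻¹ · d · c)) -> C s ->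
  (forall c, C c -> exists y m, D y /\ c = y · zpow s m) ->
  (forall m, m <> 0%Z -> ~ D (zpow s m)) -> fin_gen_subgroup G D.
Proof.
  intros NF HlC EC HD DC HN Cs Hdec Hs.
  assert (HC : is_subgroup G C) by (eapply subgroup_of_fg; eauto).
  assert (Dcj : forall c d, C c -> D d -> D (cj c d)) by (apply D_cj; auto).
  assert (Hbs : exists bs, (forall b, In b bs -> D b) /\
     forall a, In a lC -> exists b, In b bs /\ exists m, a = b · zpow s m).
  { clear EC. induction lC as [|a lC IH].
    - exists []. split. intros b []. intros a [].
    - destruct IH as [bs [H1 H2]]. intros; apply HlC; simpl; auto.
      destruct (Hdec a) as [y [m [Hy Ea]]]. apply HlC; simpl; auto.
      exists (y :: bs). split.
      + intros b [<-|Hb]; auto.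
      + intros a' [<-|Ha'].
        * exists y. split; simpl; eauto.
        * destruct (H2 a' Ha') as [b [Hb Hm]]. exists b. split; simpl; auto. }
  destruct Hbs as [bs [Hbs Hbs2]].
  destruct (vz_list D s NF HD Hs) with (bs := bs) as [l' [Hl1 Hl2]]; auto.
  all: try (intros x Hx; apply Dcj; auto; apply subV; auto).
  set (C' := gen (fun y => In y l')).
  assert (l'D : forall y, In y l' -> D y).
  { intros y Hy. destruct (Hl1 y Hy) as [b [Hb [k ->]]]. unfold vz. apply Dcj; auto. apply zpow_in; auto. }
  assert (C'D : forall x, C' x -> D x) by (apply gen_min; auto).
  assert (C'inv : forall k x, C' x -> C' (cj (zpow s k) x)).
  { intros k x Hx. apply gen_cj with (c := zpow s k) in Hx. revert Hx. apply gen_gen.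
    intros y [z [Hz ->]]. destruct (Hl1 z Hz) as [b [Hb [k' ->]]]. rewrite vz_shift. apply Hl2; auto. }
  assert (HC' : is_subgroup G C') by apply gen_subgroup.
  set (X := fun x => exists c m, C' c /\ x = c · zpow s m).
  assert (HX : is_subgroup G X).
  { split; [|split].
    - exists 1, 0%Z. split. apply sub1; auto. simpl. rewrite mulg1. auto.
    - intros x y [c [m [Hc ->]]] [c' [m' [Hc' ->]]]. exists (c · cj (zpow s m) c'), (m + m')%Z. split.
      + apply subM; auto.
      + rewrite zpow_add. unfold cj. rewrite !gmulA, mulgVK. auto.
    - intros x [c [m [Hc ->]]]. exists (cj (zpow s (- m)) c⁻¹), (- m)%Z. split.
      + apply C'inv. apply subV; auto.
      + unfold cj. rewrite mulgVK, invMg, zpow_opp. auto. }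
  assert (CX : forall x, C x -> X x).
  { intros x Hx. apply EC in Hx. revert x Hx. apply gen_min; auto.
    intros a Ha. destruct (Hbs2 a Ha) as [b [Hb [m ->]]]. exists b, m. split; auto.
    rewrite <- (vz0 s b). apply Hl2; auto. }
  exists l'. split; auto. intros x. split.
  - intros Hx. destruct (CX x (DC x Hx)) as [c [m [Hc Ex]]].
    destruct (Z.eq_dec m 0) as [->|Hm].
    + simpl in Ex. rewrite mulg1 in Ex. subst. auto.
    + exfalso. apply (Hs m Hm). replace (zpow s m) with (c⁻¹ · x).
      apply subM; auto. apply subV; auto. rewrite Ex, mulKg. auto.
  - apply C'D.
Qed.

Lemma zpow_mul_in (D : G -> Prop) s (N : Z) : is_subgroup G D -> D (zpow s N) -> forall q, D (zpow s (N * q)).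
Proof.
  intros HD HN.
  assert (Hn : forall k : nat, D (zpow s (N * Z.of_nat k))).
  { induction k as [|k IHk]. rewrite Nat2Z.inj_0, Z.mul_0_r. exact (sub1 D HD).
    replace (N * Z.of_nat (S k))%Z with (N * Z.of_nat k + N)%Z by lia. rewrite zpow_add. apply subM; auto. }
  intros q. destruct (Z_le_gt_dec 0 q).
  - replace q with (Z.of_nat (Z.to_nat q)) by lia. auto.
  - replace (N * q)%Z with (- (N * Z.of_nat (Z.to_nat (- q))))%Z by lia. rewrite zpow_opp. apply subV; auto.
Qed.

Lemma cyc_step (C D : G -> Prop) (lC : list G) (s : G) :
  ~ has_free_subsemigroup2 G ->
  (forall x, In x lC -> C x) -> (forall x, C x <-> gen (fun y => In y lC) x) ->
  is_subgroup G D -> (forall x, D x -> C x) ->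
  (forall c d, C c -> D d -> D (c⁻¹ · d · c)) -> C s ->
  (forall c, C c -> exists y m, D y /\ c = y · zpow s m) -> fin_gen_subgroup G D.
Proof.
  intros NF HlC EC HD DC HN Cs Hdec.
  assert (HC : is_subgroup G C) by (eapply subgroup_of_fg; eauto).
  destruct (classic (exists m, m <> 0%Z /\ D (zpow s m))) as [[m [Hm HDm]]|Hno].
  - assert (Hn : exists n : nat, 0 < n /\ D (zpow s (Z.of_nat n))).
    { destruct (Z_le_gt_dec 0 m).
      - exists (Z.to_nat m). split. lia. replace (Z.of_nat (Z.to_nat m)) with m by lia. auto.
      - exists (Z.to_nat (- m)). split. lia. replace (Z.of_nat (Z.to_nat (- m))) with (- m)%Z by lia.
        rewrite zpow_opp. apply subV; auto. }
    destruct Hn as [n [Hn HDn]].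
    apply (schreier C D lC (map (fun i => zpow s (Z.of_nat i)) (seq 0 n))); auto.
    + intros t Ht. apply in_map_iff in Ht. destruct Ht as [i [<- _]]. apply zpow_in; auto.
    + intros c Hc. destruct (Hdec c Hc) as [y [k [Hy ->]]].
      set (N := Z.of_nat n).
      assert (HN0 : N <> 0%Z) by lia.
      pose proof (Z_div_mod_eq_full k N) as Ek.
      pose proof (Z.mod_pos_bound k N) as Br.
      exists (zpow s (k mod N)). split.
      * replace (k mod N)%Z with (Z.of_nat (Z.to_nat (k mod N))) by lia.
        apply (in_map (fun i => zpow s (Z.of_nat i))). apply in_seq. lia.
      * rewrite Ek at 1. rewrite zpow_add, gmulA, mulgK. apply subM; auto.
        apply zpow_mul_in; auto.
  - apply (zlemma C D lC s); auto.
    intros m Hm HDm. apply Hno. eauto.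
Qed.

Lemma chain (A K : G -> Prop) (lA : list G) :
  ~ has_free_subsemigroup2 G ->
  (forall x, In x lA -> A x) -> (forall x, A x <-> gen (fun y => In y lA) x) ->
  is_subgroup G K -> (forall x, K x -> A x) ->
  (forall x y, A x -> A y -> K (x⁻¹ · y⁻¹ · x · y)) -> fin_gen_subgroup G K.
Proof.
  intros NF HlA EA HK KA Hcomm.
  assert (HA : is_subgroup G A) by (eapply subgroup_of_fg; eauto).
  set (Kl := fun l => gen (fun x => K x \/ In x l)).
  assert (KlA : forall l, (forall x, In x l -> A x) -> forall x, Kl l x -> A x).
  { intros l Hl. apply gen_min; auto. intros x [Hx|Hx]; auto. }
  assert (Norm : forall D : G -> Prop, is_subgroup G D -> (forall x, K x -> D x) -> (forall x, D x -> A x) ->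
             forall c d, A c -> D d -> D (c⁻¹ · d · c)).
  { intros D HD KD DA c d Hc Hd. replace (c⁻¹ · d · c) with (d · (d⁻¹ · c⁻¹ · d · c)).
    apply subM; auto. rewrite !gmulA, mulgV, gmul1l. auto. }
  assert (Claim : forall l, (forall x, In x l -> A x) -> fin_gen_subgroup G (Kl l) -> fin_gen_subgroup G K).
  { induction l as [|s l IH]; intros Hl Hfg.
    - revert Hfg. apply fgs_ext. intros x. split.
      + apply gen_min; auto. intros y [Hy|[]]; auto.
      + intros Hx. apply gen_in. auto.
    - apply IH. intros; apply Hl; simpl; auto.
      destruct Hfg as [lC [HlC EC]].
      assert (HKl : forall l', is_subgroup G (Kl l')) by (intros; apply gen_subgroup).
      assert (DC : forall x, Kl l x -> Kl (s :: l) x).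
      { apply gen_mono. intros x [Hx|Hx]; simpl; auto. }
      assert (NormD : forall c d, A c -> Kl l d -> Kl l (c⁻¹ · d · c)).
      { apply Norm; auto. intros x Hx. apply gen_in; auto. apply KlA. intros; apply Hl; simpl; auto. }
      apply (cyc_step (Kl (s :: l)) (Kl l) lC s); auto.
      + intros c d Hc Hd. apply NormD; auto. apply (KlA (s :: l)); auto.
      + apply gen_in. simpl; auto.
      + apply gen_min.
        * split; [|split].
          -- exists 1, 0%Z. split. apply sub1; auto. simpl. rewrite mulg1; auto.
          -- intros x y [c [m [Hc ->]]] [c' [m' [Hc' ->]]]. exists (c · cj (zpow s m) c'), (m + m')%Z. split.
             ++ apply subM; auto. apply (D_cj A); auto. apply zpow_in; auto. apply Hl; simpl; auto.
             ++ rewrite zpow_add. unfold cj. rewrite !gmulA, mulgVK. auto.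
          -- intros x [c [m [Hc ->]]]. exists (cj (zpow s (- m)) c⁻¹), (- m)%Z. split.
             ++ apply (D_cj A); auto. apply zpow_in; auto. apply Hl; simpl; auto. apply subV; auto.
             ++ unfold cj. rewrite mulgVK, invMg, zpow_opp. auto.
        * intros x [Hx|[<-|Hx]].
          -- exists x, 0%Z. split. apply gen_in; auto. simpl. rewrite mulg1; auto.
          -- exists 1, 1%Z. split. apply sub1; auto. rewrite zpow1, gmul1l. auto.
          -- exists x, 0%Z. split. apply gen_in; auto. simpl. rewrite mulg1; auto. }
  apply (Claim lA); auto. exists lA. split.
  - intros x Hx. apply gen_in. auto.
  - intros x. split.
    + intros Hx. apply EA. apply (KlA lA); auto.
    + apply gen_mono. auto.
Qed.
End Basics.

Local Infix "·" := gmul (at level 40, left associativity).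
Local Notation "x ⁻¹" := (ginv x) (at level 3, format "x ⁻¹").

Lemma hom_one (G Q : group) (f : G -> Q) : is_hom G Q f -> f gone = gone.
Proof.
  intros Hf. apply (mulg_cancel_l Q (f gone)). rewrite <- Hf, gmul1l, mulg1. auto.
Qed.

Lemma hom_inv (G Q : group) (f : G -> Q) : is_hom G Q f -> forall x, f x⁻¹ = (f x)⁻¹.
Proof.
  intros Hf x. apply inv_uniq. rewrite <- Hf, mulgV. apply hom_one; auto.
Qed.

Definition normal_in (Q : group) (H M : Q -> Prop) :=
  is_subgroup Q H /\ is_subgroup Q M /\ (forall x, M x -> H x) /\ (forall h m, H h -> M m -> M (h⁻¹ · m · h)).

Definition hom_mod (G Q : group) (A : G -> Prop) (M : Q -> Prop) (f : G -> Q) :=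
  forall x y, A x -> A y -> M ((f (x · y))⁻¹ · (f x · f y)).

Definition SP (Q : group) : Prop :=
  forall (G : group), ~ has_free_subsemigroup2 G -> forall (A : G -> Prop), fin_gen_subgroup G A ->
  forall (H M : Q -> Prop), normal_in Q H M -> forall f : G -> Q, (forall x, A x -> H (f x)) ->
  hom_mod G Q A M f -> fin_gen_subgroup G (fun x => A x /\ M (f x)).

Lemma pre_sub (G Q : group) (f : G -> Q) P : is_hom G Q f -> is_subgroup Q P -> is_subgroup G (fun x => P (f x)).
Proof.
  intros Hf HP. split; [|split].
  - rewrite hom_one; auto. apply sub1; auto.
  - intros x y Hx Hy. rewrite Hf. apply subM; auto.
  - intros x Hx. rewrite hom_inv; auto. apply subV; auto.
Qed.

Lemma pre_normal (G Q : group) (f : G -> Q) H M : is_hom G Q f -> normal_in Q H M ->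
  normal_in G (fun x => H (f x)) (fun x => M (f x)).
Proof.
  intros Hf [HH [HM [MH Hn]]]. split; [|split; [|split]].
  - apply pre_sub; auto.
  - apply pre_sub; auto.
  - auto.
  - intros h m Hh Hm. rewrite !Hf, hom_inv; auto.
Qed.

Definition img (G Q : group) (f : G -> Q) (P : G -> Prop) := fun y => exists x, P x /\ f x = y.

Lemma img_sub (G Q : group) (f : G -> Q) P : is_hom G Q f -> is_subgroup G P -> is_subgroup Q (img G Q f P).
Proof.
  intros Hf HP. split; [|split].
  - exists gone. split. apply sub1; auto. apply hom_one; auto.
  - intros x y [a [Ha <-]] [b [Hb <-]]. exists (a · b). split. apply subM; auto. apply Hf.
  - intros x [a [Ha <-]]. exists a⁻¹. split. apply subV; auto. apply hom_inv; auto.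
Qed.

Lemma img_normal (G Q : group) (f : G -> Q) H M : is_hom G Q f -> normal_in G H M ->
  normal_in Q (img G Q f H) (img G Q f M).
Proof.
  intros Hf [HH [HM [MH Hn]]]. split; [|split; [|split]].
  - apply img_sub; auto.
  - apply img_sub; auto.
  - intros x [a [Ha <-]]. exists a; auto.
  - intros h m [a [Ha <-]] [b [Hb <-]]. exists (a⁻¹ · b · a). split; auto. rewrite !Hf, hom_inv; auto.
Qed.

Section EqM.
Variables (Q : group) (H M : Q -> Prop).
Hypothesis HN : normal_in Q H M.

Definition eqM (x y : Q) := M (x⁻¹ · y).

Lemma eqM_refl x : eqM x x.
Proof. unfold eqM. rewrite gmulVl. apply sub1. apply HN. Qed.

Lemma eqM_sym x y : eqM x y -> eqM y x.
Proof.
  unfold eqM. intros E. replace (y⁻¹ · x) with ((x⁻¹ · y)⁻¹). apply subV; auto. apply HN.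
  rewrite invMg, invgK. auto.
Qed.

Lemma eqM_trans x y z : eqM x y -> eqM y z -> eqM x z.
Proof.
  unfold eqM. intros E1 E2. replace (x⁻¹ · z) with ((x⁻¹ · y) · (y⁻¹ · z)). apply subM; auto. apply HN.
  rewrite <- gmulA, mulVKg. auto.
Qed.

Lemma eqM_H x y : eqM x y -> H x -> H y.
Proof.
  unfold eqM. intros E Hx. replace y with (x · (x⁻¹ · y)). apply subM; auto. apply HN. apply HN; auto.
  apply mulVKg.
Qed.

Lemma eqM_M x y : eqM x y -> M x -> M y.
Proof.
  unfold eqM. intros E Hx. replace y with (x · (x⁻¹ · y)). apply subM; auto. apply HN.
  apply mulVKg.
Qed.

Lemma eqM_1 y : M y -> eqM gone y.
Proof. unfold eqM. rewrite invg1, gmul1l. auto. Qed.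

Lemma eqM_1' y : eqM y gone -> M y.
Proof. intros E. apply eqM_sym in E. unfold eqM in E. rewrite invg1, gmul1l in E. auto. Qed.

Lemma eqM_mul x x' y y' : H y -> eqM x x' -> eqM y y' -> eqM (x · y) (x' · y').
Proof.
  unfold eqM. intros Hy E1 E2. replace ((x · y)⁻¹ · (x' · y')) with ((y⁻¹ · (x⁻¹ · x') · y) · (y⁻¹ · y')).
  apply subM. apply HN. apply HN; auto. auto.
  rewrite invMg, !gmulA, mulgK. auto.
Qed.

Lemma eqM_inv x y : H x -> eqM x y -> eqM x⁻¹ y⁻¹.
Proof.
  unfold eqM. intros Hx E. rewrite invgK.
  replace (x · y⁻¹) with ((x⁻¹)⁻¹ · (x⁻¹ · y)⁻¹ · x⁻¹).
  apply HN. apply subV; auto. apply HN. apply subV; auto. apply HN.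
  rewrite invgK, invMg, invgK, !gmulA, mulgK. auto.
Qed.

Variables (G : group) (A : G -> Prop) (f : G -> Q).
Hypothesis HA : is_subgroup G A.
Hypothesis HfH : forall x, A x -> H (f x).
Hypothesis Hm : hom_mod G Q A M f.

Lemma hm_mul x y : A x -> A y -> eqM (f (x · y)) (f x · f y).
Proof. intros; apply Hm; auto. Qed.

Lemma hm_one : M (f gone).
Proof.
  pose proof (Hm gone gone (sub1 _ _ HA) (sub1 _ _ HA)) as E. rewrite gmul1l, mulKg in E. auto.
Qed.

Lemma hm_inv x : A x -> eqM (f x⁻¹) (f x)⁻¹.
Proof.
  intros Ax. assert (Ax' : A x⁻¹) by (apply subV; auto).
  pose proof (hm_mul x⁻¹ x Ax' Ax) as E. rewrite gmulVl in E.
  assert (E1 : eqM gone (f x⁻¹ · f x)) by (eapply eqM_trans; [apply eqM_1, hm_one|exact E]).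
  apply eqM_sym. pose proof (eqM_mul _ _ (f x)⁻¹ (f x)⁻¹ (subV _ _ (proj1 HN) _ (HfH x Ax)) E1 (eqM_refl _)) as E2.
  rewrite gmul1l, mulgK in E2. auto.
Qed.

Lemma ker_sub : is_subgroup G (fun x => A x /\ M (f x)).
Proof.
  split; [|split].
  - split. apply sub1; auto. apply hm_one.
  - intros x y [Ax Mx] [Ay My]. split. apply subM; auto.
    apply (eqM_M (f x · f y)). apply eqM_sym, hm_mul; auto. apply subM; auto. apply HN.
  - intros x [Ax Mx]. split. apply subV; auto.
    apply (eqM_M (f x)⁻¹). apply eqM_sym, hm_inv; auto. apply subV; auto. apply HN.
Qed.

End EqM.

Lemma fg_sub (G : group) (A : G -> Prop) : fin_gen_subgroup G A -> is_subgroup G A.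
Proof. apply fgs_subgroup. Qed.

Lemma SP_finite (Q : group) : finite_group Q -> SP Q.
Proof.
  intros [lq Hlq] G NF A HfgA H M HN f HfH Hm.
  pose proof HfgA as [lA [HlA EA]].
  assert (HA : is_subgroup G A) by (apply fg_sub; auto).
  assert (HT : exists T, (forall t, In t T -> A t) /\
     forall q, In q lq -> (exists a, A a /\ f a = q) -> exists t, In t T /\ f t = q).
  { clear Hlq. induction lq as [|q lq IH].
    - exists []. split. intros t []. intros q [].
    - destruct IH as [T [H1 H2]].
      destruct (classic (exists a, A a /\ f a = q)) as [[a [Ha Ea]]|Hn].
      + exists (a :: T). split.
        * intros t [<-|Ht]; auto.
        * intros q' [<-|Hq'] Hex. exists a; simpl; auto.
          destruct (H2 q' Hq' Hex) as [t [Ht Et]]. exists t; simpl; auto.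
      + exists T. split; auto. intros q' [<-|Hq'] Hex. contradiction. auto. }
  destruct HT as [T [TA HT]].
  apply (schreier G A (fun x => A x /\ M (f x)) lA T); auto.
  - eapply ker_sub; eauto.
  - intros x [Hx _]; auto.
  - intros a Ha. destruct (HT (f a) (Hlq _)) as [t [Ht Et]]. eauto.
    exists t. split; auto. split. apply subM; auto. apply subV; auto.
    assert (At : A t) by auto.
    apply (eqM_1' Q H M HN).
    eapply (eqM_trans Q H M HN). apply (hm_mul Q M G A f Hm); auto. apply subV; auto.
    eapply (eqM_trans Q H M HN). apply (eqM_mul Q H M HN). apply HfH. apply subV; auto.
    apply (eqM_refl Q H M HN). apply (hm_inv Q H M HN G A f); auto.
    rewrite Et, mulgV. apply (eqM_refl Q H M HN).
Qed.

Lemma SP_abelian (Q : group) : abelian_group Q -> SP Q.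
Proof.
  intros Hab G NF A HfgA H M HN f HfH Hm.
  pose proof HfgA as [lA [HlA EA]].
  assert (HA : is_subgroup G A) by (apply fg_sub; auto).
  assert (HH : is_subgroup Q H) by apply HN.
  apply (chain G A (fun x => A x /\ M (f x)) lA); auto.
  - eapply ker_sub; eauto.
  - intros x [Hx _]; auto.
  - intros x y Ax Ay.
    assert (Ax' : A x⁻¹) by (apply subV; auto).
    assert (Ay' : A y⁻¹) by (apply subV; auto).
    assert (A1 : A (x⁻¹ · y⁻¹)) by (apply subM; auto).
    assert (A2 : A (x⁻¹ · y⁻¹ · x)) by (apply subM; auto).
    split. apply subM; auto.
    apply (eqM_1' Q H M HN).
    assert (E : eqM Q M (f (x⁻¹ · y⁻¹ · x · y)) ((f x)⁻¹ · (f y)⁻¹ · f x · f y)).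
    { eapply (eqM_trans Q H M HN). apply (hm_mul Q M G A f Hm); auto.
      apply (eqM_mul Q H M HN); auto. 2: apply (eqM_refl Q H M HN).
      eapply (eqM_trans Q H M HN). apply (hm_mul Q M G A f Hm); auto.
      apply (eqM_mul Q H M HN); auto. 2: apply (eqM_refl Q H M HN).
      eapply (eqM_trans Q H M HN). apply (hm_mul Q M G A f Hm); auto.
      apply (eqM_mul Q H M HN); auto. apply (hm_inv Q H M HN G A f); auto.
      apply (hm_inv Q H M HN G A f); auto. }
    eapply (eqM_trans Q H M HN). exact E.
    rewrite <- (gmulA _ _ (f y)⁻¹ (f x)), (Hab (f y)⁻¹ (f x)), gmulA, gmulVl, gmul1l, gmulVl.
    apply (eqM_refl Q H M HN).
Qed.

Lemma SP_sub (G' H0 : group) (e : H0 -> G') : is_hom H0 G' e -> injective e -> SP G' -> SP H0.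
Proof.
  intros He Hi IH G NF A HfgA H M HN f HfH Hm.
  assert (HN' : normal_in G' (img H0 G' e H) (img H0 G' e M)) by (apply img_normal; auto).
  apply (fgs_ext G (fun x => A x /\ img H0 G' e M (e (f x)))).
  - intros x. split.
    + intros [Ax [m [Mm Em]]]. apply Hi in Em. subst. auto.
    + intros [Ax Mx]. split; auto. exists (f x); auto.
  - apply (IH G NF A HfgA _ _ HN' (fun x => e (f x))).
   + intros x Ax. exists (f x); auto.
   + intros x y Ax Ay. exists ((f (x · y))⁻¹ · (f x · f y)). split. apply Hm; auto.
    rewrite !He, hom_inv; auto.
Qed.

Lemma SP_quot (G' Q : group) (p : G' -> Q) : is_hom G' Q p -> surjective p -> SP G' -> SP Q.
Proof.
  intros Hp Hs IH G NF A HfgA H M HN f HfH Hm.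
  set (fl := fun x => proj1_sig (constructive_indefinite_description _ (Hs (f x)))).
  assert (Efl : forall x, p (fl x) = f x) by (intros x; apply (proj2_sig (constructive_indefinite_description _ (Hs (f x))))).
  apply (fgs_ext G (fun x => A x /\ M (p (fl x)))).
  - intros x. rewrite Efl. tauto.
  - apply (IH G NF A HfgA _ _ (pre_normal G' Q p H M Hp HN) fl).
   + intros x Ax. rewrite Efl; auto.
   + intros x y Ax Ay. simpl. rewrite !Hp, hom_inv, !Efl; auto.
Qed.

Lemma SP_ext (K L Q : group) (i : K -> L) (p : L -> Q) :
  is_hom K L i -> injective i -> is_hom L Q p -> surjective p ->
  (forall x : L, p x = gone <-> exists k, i k = x) -> SP K -> SP Q -> SP L.
Proof.
  intros Hi Hinj Hp Hs Hker IHK IHQ G NF A HfgA H M HN f HfH Hm.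
  assert (HA : is_subgroup G A) by (apply fg_sub; auto).
  assert (HH : is_subgroup L H) by apply HN.
  assert (HM : is_subgroup L M) by apply HN.
  assert (MH : forall x, M x -> H x) by apply HN.
  set (G1 := fun x => A x /\ img L Q p M (p (f x))).
  assert (G1fg : fin_gen_subgroup G G1).
  { apply (IHQ G NF A HfgA _ _ (img_normal L Q p H M Hp HN) (fun x => p (f x))).
    - intros x Ax. exists (f x); split; auto.
    - intros x y Ax Ay. exists ((f (x · y))⁻¹ · (f x · f y)). split. apply Hm; auto.
      rewrite !Hp, hom_inv; auto. }
  assert (HG1 : is_subgroup G G1) by (apply fg_sub; auto).
  assert (Hk : forall x, exists k, G1 x -> exists m, M m /\ f x = m · i k).
  { intros x. destruct (classic (G1 x)) as [[Ax [m [Mm Em]]]|n].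
    - assert (E : p (m⁻¹ · f x) = gone) by (rewrite Hp, hom_inv, Em, gmulVl; auto).
      apply Hker in E. destruct E as [k Ek]. exists k. intros _. exists m. split; auto.
      rewrite Ek, mulVKg. auto.
    - exists gone. intros; contradiction. }
  set (kf := fun x => proj1_sig (constructive_indefinite_description _ (Hk x))).
  assert (Hkf : forall x, G1 x -> exists m, M m /\ f x = m · i (kf x))
    by (intros x; apply (proj2_sig (constructive_indefinite_description _ (Hk x)))).
  assert (HiH : forall x, G1 x -> H (i (kf x))).
  { intros x Gx. destruct (Hkf x Gx) as [m [Mm Em]].
    replace (i (kf x)) with (m⁻¹ · f x). apply subM; auto. apply subV; auto. apply HfH. apply Gx.
    rewrite Em, mulKg. auto. }
  assert (Key : forall x, G1 x -> eqM L M (i (kf x)) (f x)).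
  { intros x Gx. pose proof (HiH x Gx) as Hh. destruct (Hkf x Gx) as [m [Mm Em]].
    unfold eqM. rewrite Em, gmulA. apply HN; auto. }
  apply (fgs_ext G (fun x => G1 x /\ M (i (kf x)))).
  - intros x. split.
    + intros [Gx Mx]. split. apply Gx. apply (eqM_M L H M HN (i (kf x))); auto.
    + intros [Ax Mx]. assert (Gx : G1 x) by (split; auto; exists (f x); auto).
      split; auto. apply (eqM_M L H M HN (f x)); auto. apply (eqM_sym L H M HN); auto.
  - apply (IHK G NF G1 G1fg _ _ (pre_normal K L i H M Hi HN) kf).
    + auto.
    + intros x y Gx Gy. assert (Gxy : G1 (x · y)) by (apply subM; auto).
      rewrite !Hi, hom_inv; auto. fold (eqM L M (i (kf (x · y))) (i (kf x) · i (kf y))).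
      eapply (eqM_trans L H M HN). apply Key; auto.
      eapply (eqM_trans L H M HN). apply (hm_mul L M G A f Hm); [apply Gx|apply Gy].
      apply (eqM_mul L H M HN). apply HfH, Gy.
      apply (eqM_sym L H M HN); auto. apply (eqM_sym L H M HN); auto.
Qed.

Lemma SP_union (L : group) (I : Type) (Hf : I -> group) (e : forall i, Hf i -> L) :
  (forall i, is_hom (Hf i) L (e i)) -> (forall i, injective (e i)) ->
  (forall i j, exists k, (forall y, exists z, e k z = e i y) /\ (forall y, exists z, e k z = e j y)) ->
  (forall x : L, exists i y, e i y = x) -> (forall i, SP (Hf i)) -> SP L.
Proof.
  intros He Hinj Hdir Hcov IH G NF A HfgA H M HN f HfH Hm.
  assert (HA : is_subgroup G A) by (apply fg_sub; auto).
  assert (HH : is_subgroup L H) by apply HN.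
  assert (HM : is_subgroup L M) by apply HN.
  assert (Fin : forall xs : list L, exists k, forall x, In x xs -> exists z, e k z = x).
  { induction xs as [|x xs [k Hk]].
    - destruct (Hcov gone) as [i _]. exists i. intros x [].
    - destruct (Hcov x) as [i [y Ey]]. destruct (Hdir i k) as [k' [H1 H2]]. exists k'.
      intros x' [<-|Hx'].
      + rewrite <- Ey. apply H1.
      + destruct (Hk x' Hx') as [z <-]. apply H2. }
  pose proof HfgA as [lA [HlA EA]].
  destruct (Fin (map f lA)) as [k Hk].
  assert (Cov : forall a, A a -> exists z, eqM L M (f a) (e k z)).
  { intros a0 Aa. apply EA in Aa. cut (A a0 /\ exists z, eqM L M (f a0) (e k z)). tauto. revert a0 Aa.
    apply (gen_min G (fun s => In s lA) (fun a => A a /\ exists z, eqM L M (f a) (e k z))).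
    - split; [|split].
      + split. apply sub1; auto. exists gone. rewrite (hom_one _ _ (e k) (He k)).
        apply (eqM_sym L H M HN). apply (eqM_1 L M). apply (hm_one L M G A f HA Hm).
      + intros x y [Ax [z Ez]] [Ay [z' Ez']]. split. apply subM; auto. exists (z · z'). rewrite He.
        eapply (eqM_trans L H M HN). apply (hm_mul L M G A f Hm); auto.
        apply (eqM_mul L H M HN); auto.
      + intros x [Ax [z Ez]]. split. apply subV; auto. exists z⁻¹. rewrite (hom_inv _ _ (e k) (He k)).
        eapply (eqM_trans L H M HN). apply (hm_inv L H M HN G A f); auto.
        apply (eqM_inv L H M HN); auto.
    - intros a Ha. split. auto. destruct (Hk (f a)) as [z Ez]. apply in_map; auto. exists z. rewrite Ez. apply (eqM_refl L H M HN). }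
  set (zf := fun a => match excluded_middle_informative (A a) with
                      | left Ha => proj1_sig (constructive_indefinite_description _ (Cov a Ha))
                      | right _ => gone end).
  assert (Hzf : forall a, A a -> eqM L M (f a) (e k (zf a))).
  { intros a Aa. unfold zf. destruct (excluded_middle_informative (A a)) as [Ha|Ha].
    apply (proj2_sig (constructive_indefinite_description _ (Cov a Ha))). contradiction. }
  apply (fgs_ext G (fun x => A x /\ M (e k (zf x)))).
  - intros x. split.
    + intros [Ax Mx]. split; auto. apply (eqM_M L H M HN (e k (zf x))); auto. apply (eqM_sym L H M HN); auto.
    + intros [Ax Mx]. split; auto. apply (eqM_M L H M HN (f x)); auto.
  - apply (IH k G NF A HfgA _ _ (pre_normal _ L (e k) H M (He k) HN) zf).
    + intros x Ax. apply (eqM_H L H M HN (f x)); auto.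
    + intros x y Ax Ay. assert (Axy : A (x · y)) by (apply subM; auto).
      rewrite !He, hom_inv; auto. fold (eqM L M (e k (zf (x · y))) (e k (zf x) · e k (zf y))).
      eapply (eqM_trans L H M HN). apply (eqM_sym L H M HN); auto.
      eapply (eqM_trans L H M HN). apply (hm_mul L M G A f Hm); auto.
      apply (eqM_mul L H M HN); auto.
Qed.

Lemma SP_all (Q : group) : elem_amenable Q -> SP Q.
Proof.
  induction 1.
  - apply SP_finite; auto.
  - apply SP_abelian; auto.
  - eapply SP_sub; eauto.
  - eapply SP_quot; eauto.
  - eapply SP_ext; eauto.
  - eapply SP_union; eauto.
Qed.

Theorem mainTheorem2 (G : group) (N : G -> Prop) :
  fin_gen G -> ~ has_free_subsemigroup2 G -> is_normal G N ->
  quotient_elem_amenable G N -> fin_gen_subgroup G N.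
Proof.
  intros [l Hl] NF HNo [Q [f [Hf [Hs [HN HQ]]]]].
  assert (HNQ : normal_in Q (fun _ => True) (fun q => q = gone)).
  { split; [|split; [|split]].
    - split; auto.
    - split; [|split]. auto. intros x y -> ->. apply gmul1l. intros x ->. apply invg1.
    - auto.
    - intros h m _ ->. rewrite mulg1, gmulVl. auto. }
  apply (fgs_ext G (fun x => True /\ f x = gone)).
  - intros x. rewrite HN. tauto.
  - apply (SP_all Q HQ G NF (fun _ => True)) with (H := fun _ => True) (M := fun q => q = gone) (f := f).
    + exists l. split; auto. intros x. split; auto.
    + exact HNQ.
    + auto.
    + intros x y _ _. rewrite Hf, gmulVl. auto.
Qed.
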